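(* The wall $W$ is bipartite and $3$-monotone: with $A:=\{(x,y)\in\mathbb{Z}^2: x+y\text{ even}\}$ and $B:=\{(x,y)\in\mathbb{Z}^2: x+y \text{ odd}\}$ as colour classes, each linearly ordered by $\preceq$, the edge set of $W$ is the union of three monotone matchings.
   Context: The wall is the infinite graph $W$ with vertex set $\mathbb{Z}^2$ and edge set $\{(x,y)(x+1,y): x,y\in\mathbb{Z}\}\cup\{(x,y)(x,y+1): x,y\in\mathbb{Z},\ x+y\text{ even}\}$; it is $3$-regular and planar. Define the linear order $\preceq$ on $\mathbb{Z}^2$ by $(x,y)\preceq(x',y')$ if $x+y<x'+y'$, or $x+y=x'+y'$ and $x\leq x'$. For a bipartite graph with linearly ordered colour classes $A$ and $B$, edges $ab$ and $a'b'$ ($a,a'\in A$, $b,b'\in B$) cross if $a\prec a'$ and $b'\prec b$; a matching is monotone if no two of its edges cross; the graph is $d$-monotone if its edge set is the union of $d$ monotone matchings. *)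

(* Defs.v *)
From Stdlib Require Import ZArith.
Open Scope Z_scope.

Definition vtx := (Z * Z)%type.

Definition wall_edge (u v : vtx) : Prop :=
  let '(x, y) := u in let '(x', y') := v in
     (y' = y /\ x' = x + 1)
  \/ (y' = y /\ x = x' + 1)
  \/ (x' = x /\ y' = y + 1 /\ Z.Even (x + y))
  \/ (x' = x /\ y = y' + 1 /\ Z.Even (x' + y')).

Definition inA (u : vtx) : Prop := Z.Even (fst u + snd u).
Definition inB (u : vtx) : Prop := Z.Odd (fst u + snd u).

Definition wle (u v : vtx) : Prop :=
  fst u + snd u < fst v + snd v \/
  (fst u + snd u = fst v + snd v /\ fst u <= fst v).
Definition wlt (u v : vtx) : Prop := wle u v /\ u <> v.

(* A set of edges between A and B, given as pairs (a, b) with a in A, b in B. *)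
Definition bipedges := vtx -> vtx -> Prop.

Definition is_matching (M : bipedges) : Prop :=
  (forall a b, M a b -> inA a /\ inB b /\ wall_edge a b) /\
  (forall a b b', M a b -> M a b' -> b = b') /\
  (forall a a' b, M a b -> M a' b -> a = a').

Definition cross (a b a' b' : vtx) : Prop := wlt a a' /\ wlt b' b.

Definition is_monotone_matching (M : bipedges) : Prop :=
  is_matching M /\
  (forall a b a' b', M a b -> M a' b' -> ~ cross a b a' b').

(* Main.v *)
Require Import Defs.
From Stdlib Require Import ZArith Lia.
Open Scope Z_scope.

Definition T (dx dy : Z) : bipedges := fun a b =>
  inA a /\ inB b /\ wall_edge a b /\ fst b = fst a + dx /\ snd b = snd a + dy.

Lemma T_mono dx dy : is_monotone_matching (T dx dy).
Proof.
  split; [split; [|split]|].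
  - intros a b (H1 & H2 & H3 & _); auto.
  - intros [x y] [u v] [u' v'] (_&_&_&H1&H2) (_&_&_&H3&H4); simpl in *.
    f_equal; lia.
  - intros [x y] [x' y'] [u v] (_&_&_&H1&H2) (_&_&_&H3&H4); simpl in *.
    f_equal; lia.
  - intros [x y] [u v] [x' y'] [u' v'] (_&_&_&H1&H2) (_&_&_&H3&H4)
      [[Ha Hna] [Hb Hnb]]; unfold wle in *; simpl in *.
    apply Hna. f_equal; lia.
Qed.

Theorem lemma11 :
  (* bipartite with colour classes A, B *)
  (forall u v : vtx, wall_edge u v ->
     (inA u /\ inB v) \/ (inB u /\ inA v)) /\
  (* 3-monotone: edge set is the union of three monotone matchings *)
  (exists M1 M2 M3 : bipedges,
     is_monotone_matching M1 /\ is_monotone_matching M2 /\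
     is_monotone_matching M3 /\
     (forall a b : vtx, inA a -> inB b ->
        (wall_edge a b <-> (M1 a b \/ M2 a b \/ M3 a b)))).
Proof.
  split.
  - intros [x y] [x' y'] H; unfold inA, inB; simpl in *.
    destruct (Z.Even_or_Odd (x + y)) as [[k Hk]|[k Hk]];
    destruct H as [[-> ->]|[[-> ->]|[[-> [-> [m Hm]]]|[-> [-> [m Hm]]]]]].
    all: first [ left; split; [exists k|exists k]; lia
               | right; split; [exists k|exists (k+1)]; lia
               | right; split; [exists k|exists k]; lia
               | left; split; [exists k|exists (k-1)]; lia
               | exfalso; lia ].
  - exists (T 1 0), (T (-1) 0), (T 0 1).
    split; [apply T_mono|split; [apply T_mono|split; [apply T_mono|]]].
    intros [x y] [x' y'] HA HB; unfold T; simpl; split.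
    + intros H.
      assert (H' := H).
      destruct H as [[-> ->]|[[-> ->]|[[-> [-> _]]|[-> [-> [m Hm]]]]]].
      * left; repeat split; auto; lia.
      * right; left; repeat split; auto; lia.
      * right; right; repeat split; auto; lia.
      * exfalso; destruct HB as [k Hk]; cbn [fst snd] in Hk; lia.
    + intros [(_&_&H&_)|[(_&_&H&_)|(_&_&H&_)]]; exact H.
Qed.
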